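(* Let $a=\{a_1,\dots,a_m\}\subseteq\mathbb{Z}_{\ge 2}$. Then for every $n\ge0$, $$r(\mathcal{A}_n(a))=\sum_{i=0}^n\binom{n}{i}\,r(\widetilde{\mathcal{C}}_i)\,r(\widetilde{\mathcal{C}}_{n-i}).$$
   Context: For a set $a=\{a_1,\dots,a_m\}$ of integers $\ge2$ and $n\ge 1$, $\mathcal{A}_n(a)$ denotes the hyperplane arrangement in $\mathbb{R}^n$ consisting of the hyperplanes $x_i=0$ ($1\le i\le n$), $x_i=x_j$ ($1\le i<j\le n$), and $x_i=a_rx_j$ ($1\le i\neq j\le n$, $1\le r\le m$). $\widetilde{\mathcal{C}}_n$ denotes the arrangement in $\mathbb{R}^n$ consisting of the hyperplanes $x_i-x_j=0$ ($1\le i<j\le n$) and $x_i-x_j=\log a_r/\log a_1$ ($1\le i\neq j\le n$, $1\le r\le m$; for $r=1$ this is $x_i-x_j=1$). For $n=0$ both are empty arrangements in $\mathbb{R}^0$ with one region. $r(\mathcal{A})$ denotes the number of connected components of $\mathbb{R}^n\setminus\bigcup_{H\in\mathcal{A}}H$. *)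

(* Defs.v *)
From Stdlib Require Import Reals ClassicalEpsilon.
From mathcomp Require Import all_boot.

Set Implicit Arguments.
Unset Strict Implicit.
Unset Printing Implicit Defensive.
Local Open Scope R_scope.

Definition vec (n : nat) := 'I_n -> R.

(* Open subsets of R^n (sup-norm balls; same topology as Euclidean). *)
Definition is_open (n : nat) (U : vec n -> Prop) : Prop :=
  forall x, U x -> exists eps : R, (0 < eps) /\
    forall y : vec n, (forall i, (Rabs (y i - x i) < eps)) -> U y.

Definition is_connected (n : nat) (T : vec n -> Prop) : Prop :=
  forall U V : vec n -> Prop, is_open U -> is_open V ->
    (forall x, T x -> U x \/ V x) ->
    (forall x, T x -> U x -> V x -> False) ->
    (forall x, T x -> U x) \/ (forall x, T x -> V x).

Definition same_comp (n : nat) (S : vec n -> Prop) (x y : vec n) : Prop :=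
  exists T : vec n -> Prop, (forall z, T z -> S z) /\ is_connected T /\ T x /\ T y.

Definition has_ncomp (n : nat) (S : vec n -> Prop) (k : nat) : Prop :=
  exists f : vec n -> nat,
    (forall x, S x -> (f x < k)%N) /\
    (forall j, (j < k)%N -> exists x, S x /\ f x = j) /\
    (forall x y, S x -> S y -> (f x = f y <-> same_comp S x y)).

(* number of connected components (0 if not finite; never the case here) *)
Definition ncomp (n : nat) (S : vec n -> Prop) : nat :=
  epsilon (inhabits O) (fun k => has_ncomp S k).

Definition compl_A (a : seq nat) (n : nat) : vec n -> Prop := fun x =>
  (forall i, x i <> 0) /\
  (forall i j : 'I_n, (i < j)%N -> x i <> x j) /\
  (forall i j : 'I_n, i <> j -> forall r : nat, r \in a -> x i <> (INR r * x j)).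

(* Complement of the arrangement C~_n in R^n; a_1 = head of the list a. *)
Definition compl_C (a : seq nat) (n : nat) : vec n -> Prop := fun x =>
  (forall i j : 'I_n, (i < j)%N -> x i <> x j) /\
  (forall i j : 'I_n, i <> j -> forall r : nat, r \in a ->
     (x i - x j) <> (ln (INR r) / ln (INR (head O a)))).

Definition rA (a : seq nat) (n : nat) : nat := ncomp (@compl_A a n).
Definition rC (a : seq nat) (n : nat) : nat := ncomp (@compl_C a n).

(* Main.v *)
Require Import Defs.
From Stdlib Require Import Reals.
From Stdlib Require Import Lra Classical ClassicalEpsilon FunctionalExtensionality.
From mathcomp Require Import all_boot.
Set Implicit Arguments. Unset Strict Implicit. Unset Printing Implicit Defensive.
Definition pb (P : Prop) : bool := if excluded_middle_informative P then true else false.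
Lemma pbP (P : Prop) : reflect P (pb P).
Proof. rewrite /pb; case: excluded_middle_informative => h; constructor; done. Qed.

Lemma has_ncomp_uniq_le n (S : vec n -> Prop) k1 k2 :
  has_ncomp S k1 -> has_ncomp S k2 -> (k1 <= k2)%N.
Proof.
  move=> [f1 [H1a [H1b H1c]]] [f2 [H2a [H2b H2c]]].
  have rep : forall j : 'I_k1, {x | S x /\ f1 x = j}.
    move=> j; apply: constructive_indefinite_description; exact: H1b.
  pose h (j : 'I_k1) : 'I_k2 := Ordinal (H2a _ (proj1 (proj2_sig (rep j)))).
  have hinj : injective h.
    move=> i j /(congr1 val) /=.
    case: (rep i) => xi [Si fi]; case: (rep j) => xj [Sj fj] /= E.
    apply: val_inj => /=; rewrite -fi -fj; apply/(H1c _ _ Si Sj); apply/(H2c _ _ Si Sj); exact E.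
  by have := leq_card h hinj; rewrite !card_ord.
Qed.

Lemma ncomp_eq n (S : vec n -> Prop) k : has_ncomp S k -> ncomp S = k.
Proof.
  move=> H; rewrite /ncomp.
  have H' := epsilon_spec (inhabits O) (fun k => has_ncomp S k) (ex_intro _ k H).
  by apply/eqP; rewrite eqn_leq (has_ncomp_uniq_le H H') (has_ncomp_uniq_le H' H).
Qed.

Definition Img n (S : vec n -> Prop) (K : finType) (key : vec n -> K) : {set K} :=
  [set kk | pb (exists x, S x /\ key x = kk)].

Lemma has_ncomp_key n (S : vec n -> Prop) (K : finType) (key : vec n -> K) :
  (forall x y, S x -> S y -> (key x = key y <-> same_comp S x y)) ->
  has_ncomp S #|Img S key|.
Proof.
  move=> Hk.
  set I := Img S key.
  have memI : forall x, S x -> key x \in I.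
    by move=> x Sx; rewrite inE; apply/pbP; exists x.
  exists (fun x => index (key x) (enum I)); split; [|split].
  - move=> x Sx; rewrite cardE index_mem mem_enum; exact: memI.
  - move=> j hj.
    have kI : enum_val (Ordinal hj) \in I by exact: enum_valP.
    move: (kI); rewrite inE => /pbP [x [Sx Ex]]; exists x; split => //.
    rewrite Ex. set e := enum_val _. have -> : e = nth e (enum I) j by exact: enum_val_nth. rewrite index_uniq //.
      by rewrite -cardE.
    exact: enum_uniq.
  - move=> x y Sx Sy; rewrite -Hk //; split; last by move=> ->.
    move=> E.
    have mx : key x \in enum I by rewrite mem_enum; exact: memI.
    have my : key y \in enum I by rewrite mem_enum; exact: memI.
    by rewrite -(nth_index (key x) mx) E (nth_index (key x) my).
Qed.

Lemma ncomp_key n (S : vec n -> Prop) (K : finType) (key : vec n -> K) :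
  (forall x y, S x -> S y -> (key x = key y <-> same_comp S x y)) ->
  ncomp S = #|Img S key|.
Proof. by move=> H; apply: ncomp_eq; apply: has_ncomp_key. Qed.
Local Open Scope R_scope.

Lemma fin_bound n (d : 'I_n -> R) : exists M, 0 <= M /\ forall i, Rabs (d i) <= M.
Proof.
  suff H : forall s : seq 'I_n, exists M, 0 <= M /\ forall i, i \in s -> Rabs (d i) <= M.
    have [M [M0 HM]] := H (enum 'I_n). exists M; split => // i; apply: HM; by rewrite mem_enum.
  elim=> [|j s [M [M0 HM]]]; first by exists 0; split => [|i]; [lra|rewrite in_nil].
  exists (Rmax (Rabs (d j)) M); split; first by apply: Rle_trans (Rmax_r _ _).
  move=> i; rewrite in_cons => /orP [/eqP ->|hi]; first exact: Rmax_l.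
  apply: Rle_trans (Rmax_r _ _); exact: HM.
Qed.

Definition seg n (x y : vec n) (s : R) : vec n := fun i => x i + s * (y i - x i).
Definition clamp (s : R) := Rmax 0 (Rmin 1 s).

Lemma clamp_lip s t : Rabs (clamp s - clamp t) <= Rabs (s - t).
Proof.
  rewrite /clamp /Rmax /Rmin.
  repeat match goal with |- context [Rle_dec ?a ?b] => destruct (Rle_dec a b) | H : context [Rle_dec ?a ?b] |- _ => destruct (Rle_dec a b) end;
  repeat match goal with H : ~ (_ <= _) |- _ => apply Rnot_le_lt in H end;
  split_Rabs; lra.
Qed.

Lemma clamp_range s : 0 <= clamp s <= 1.
Proof.
  rewrite /clamp /Rmax /Rmin.
  repeat match goal with |- context [Rle_dec ?a ?b] => destruct (Rle_dec a b) | H : context [Rle_dec ?a ?b] |- _ => destruct (Rle_dec a b) end;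
  repeat match goal with H : ~ (_ <= _) |- _ => apply Rnot_le_lt in H end; lra.
Qed.

Lemma clamp_id s : 0 <= s <= 1 -> clamp s = s.
Proof.
  move=> h; rewrite /clamp /Rmax /Rmin.
  repeat match goal with |- context [Rle_dec ?a ?b] => destruct (Rle_dec a b) | H : context [Rle_dec ?a ?b] |- _ => destruct (Rle_dec a b) end;
  repeat match goal with H : ~ (_ <= _) |- _ => apply Rnot_le_lt in H end; lra.
Qed.

Definition segset n (x y : vec n) : vec n -> Prop :=
  fun z => exists s, 0 <= s <= 1 /\ z = seg x y s.

Lemma seg_close n (x y : vec n) M s t e : 0 <= M -> (forall i, Rabs (y i - x i) <= M) ->
  0 < e -> Rabs (s - t) < e / (M + 1) ->
  forall i, Rabs (seg x y (clamp s) i - seg x y (clamp t) i) < e.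
Proof.
  move=> M0 HM e0 hs i.
  have -> : seg x y (clamp s) i - seg x y (clamp t) i = (clamp s - clamp t) * (y i - x i)
    by rewrite /seg; ring.
  rewrite Rabs_mult.
  have h1 := clamp_lip s t. have h2 := HM i.
  have h3 : Rabs (s - t) * (M + 1) < e.
    have := Rmult_lt_compat_r (M + 1) _ _ ltac:(lra) hs.
    rewrite /Rdiv Rmult_assoc Rinv_l; lra.
  have := Rabs_pos (clamp s - clamp t). have := Rabs_pos (y i - x i). have := Rabs_pos (s - t).
  nra.
Qed.

Lemma seg_conn_aux n (x y : vec n) (U V : vec n -> Prop) :
  is_open U -> is_open V ->
  (forall z, segset x y z -> U z \/ V z) ->
  (forall z, segset x y z -> U z -> V z -> False) ->
  U (seg x y 0) -> forall z, segset x y z -> U z.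
Proof.
  move=> HU HV Hc Hd U0 z [s0 [hs0 ->]].
  case: (classic (U (seg x y s0))) => // nU; exfalso.
  pose c := fun s => if excluded_middle_informative (U (seg x y (clamp s))) then -1/2 else 1/2.
  have [M [M0 HM]] := fin_bound (fun i => y i - x i).
  have segT : forall s, segset x y (seg x y (clamp s)).
    by move=> s; exists (clamp s); split => //; apply: clamp_range.
  have cont : continuity c.
    move=> t eps heps.
    have [Ut|nUt] := excluded_middle_informative (U (seg x y (clamp t))).
    - have [e [e0 He]] := HU _ Ut.
      exists (e / (M+1)); split; first by apply: Rdiv_lt_0_compat; lra.
      move=> s [_ hs]; simpl in hs; rewrite /R_dist in hs.
      have Us : U (seg x y (clamp s)) by apply: He => i; exact: (seg_close M0 HM e0 hs).
      rewrite /c; simpl; rewrite /R_dist.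
      case: excluded_middle_informative => // ?; case: excluded_middle_informative => // ?.
      rewrite Rminus_diag Rabs_R0; lra.
    - have Vt : V (seg x y (clamp t)) by case: (Hc _ (segT t)).
      have [e [e0 He]] := HV _ Vt.
      exists (e / (M+1)); split; first by apply: Rdiv_lt_0_compat; lra.
      move=> s [_ hs]; simpl in hs; rewrite /R_dist in hs.
      have Vs : V (seg x y (clamp s)) by apply: He => i; exact: (seg_close M0 HM e0 hs).
      have nUs : ~ U (seg x y (clamp s)) by move=> Us; apply: (Hd _ (segT s)).
      rewrite /c; simpl; rewrite /R_dist.
      case: excluded_middle_informative => // ?; case: excluded_middle_informative => // ?.
      rewrite Rminus_diag Rabs_R0; lra.
  have s0pos : 0 < s0.
    case: (Rle_lt_or_eq_dec 0 s0 (proj1 hs0)) => // E; by rewrite -E in nU.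
  have c0 : c 0 < 0.
    rewrite /c clamp_id; last lra.
    case: excluded_middle_informative => h /=; [lra|by case: (h U0)].
  have cs0 : 0 < c s0.
    rewrite /c clamp_id //.
    case: excluded_middle_informative => h /=; [by case: (nU h)|lra].
  have [w [_ hw]] := IVT c 0 s0 cont s0pos c0 cs0.
  move: hw; rewrite /c; case: excluded_middle_informative => ? /=; lra.
Qed.

Lemma seg_connected n (x y : vec n) : is_connected (segset x y).
Proof.
  move=> U V HU HV Hc Hd.
  have S0 : segset x y (seg x y 0) by exists 0; split => //; lra.
  case: (Hc _ S0) => H0; [left|right].
    exact: (seg_conn_aux HU HV Hc Hd H0).
  apply: (seg_conn_aux HV HU) => //.
    by move=> z Sz; case: (Hc _ Sz); tauto.
  move=> z Sz a b; exact: (Hd z Sz b a).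
Qed.

Record Form (n : nat) := mkForm { fI : 'I_n; fJ : 'I_n; fA : R; fB : R; fC : R }.
Definition gf n (f : Form n) (x : vec n) : R := fA f * x (fI f) + fB f * x (fJ f) + fC f.
Definition negf n (f : Form n) : Form n := mkForm (fI f) (fJ f) (- fA f) (- fB f) (- fC f).
Lemma gf_neg n (f : Form n) x : gf (negf f) x = - gf f x.
Proof. rewrite /gf /=; ring. Qed.

Lemma open_neg n (f : Form n) : is_open (fun z => gf f z < 0).
Proof.
  move=> x hx.
  set A := fA f; set B := fB f.
  have D : 0 < Rabs A + Rabs B + 1 by have := Rabs_pos A; have := Rabs_pos B; lra.
  exists (- gf f x / (Rabs A + Rabs B + 1)); split.
    apply: Rdiv_lt_0_compat; lra.
  set eps := - gf f x / _.
  have E : eps * (Rabs A + Rabs B + 1) = - gf f x by rewrite /eps; field; lra.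
  have e0 : 0 < eps by rewrite /eps; apply: Rdiv_lt_0_compat; lra.
  move=> y hy.
  have -> : gf f y = gf f x + A * (y (fI f) - x (fI f)) + B * (y (fJ f) - x (fJ f))
    by rewrite /gf /A /B; ring.
  have h1 := Rle_abs (A * (y (fI f) - x (fI f))).
  have h2 := Rle_abs (B * (y (fJ f) - x (fJ f))).
  rewrite Rabs_mult in h1; rewrite Rabs_mult in h2.
  have h3 := hy (fI f); have h4 := hy (fJ f).
  have := Rabs_pos A; have := Rabs_pos B.
  nra.
Qed.

Definition Rltb (u v : R) : bool := if Rlt_dec u v then true else false.
Lemma RltbP u v : reflect (u < v) (Rltb u v).
Proof. by rewrite /Rltb; case: Rlt_dec => h; constructor. Qed.

Definition keyf n (F : finType) (fm : F -> Form n) (x : vec n) : {ffun F -> bool} :=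
  [ffun k => Rltb (gf (fm k) x) 0].

Lemma gf_seg n (f : Form n) x y s : gf f (seg x y s) = (1 - s) * gf f x + s * gf f y.
Proof. rewrite /gf /seg; ring. Qed.

Lemma region n (F : finType) (fm : F -> Form n) (S : vec n -> Prop) :
  (forall x, S x <-> forall k, gf (fm k) x <> 0) ->
  forall x y, S x -> S y -> (keyf fm x = keyf fm y <-> same_comp S x y).
Proof.
  move=> HS x y Sx Sy; split.
  - move=> E; exists (segset x y); split; [|split; [exact: seg_connected|split]].
    + move=> z [s [hs ->]]; apply/HS => k.
      have := congr1 (fun f : {ffun F -> bool} => f k) E; rewrite /= !ffunE => Ek.
      have hx := (proj1 (HS x) Sx k); have hy := (proj1 (HS y) Sy k).
      rewrite gf_seg.
      case: (Rlt_dec (gf (fm k) x) 0) => lx.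
      * have ly : gf (fm k) y < 0 by apply/RltbP; rewrite -Ek; apply/RltbP.
        nra.
      * have ly : ~ gf (fm k) y < 0 by move/RltbP; rewrite -Ek => /RltbP.
        nra.
    + exists 0; split; first lra.
      by apply: functional_extensionality => i; rewrite /seg; ring.
    + exists 1; split; first lra.
      by apply: functional_extensionality => i; rewrite /seg; ring.
  - move=> [T [TS [Tc [Tx Ty]]]]; apply/ffunP => k; rewrite !ffunE.
    have := Tc (fun z => gf (fm k) z < 0) (fun z => gf (negf (fm k)) z < 0)
      (@open_neg n (fm k)) (@open_neg n (negf (fm k))).
    case.
    + move=> z Tz; rewrite gf_neg; have := proj1 (HS z) (TS z Tz) k.
      case: (Rlt_dec (gf (fm k) z) 0) => h; [left|right]; lra.
    + move=> z _; rewrite gf_neg; lra.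
    + move=> H; have := H x Tx; have := H y Ty.
      by move=> /RltbP -> /RltbP ->.
    + move=> H; have := H x Tx; have := H y Ty; rewrite !gf_neg => h1 h2.
      have h1' : ~ gf (fm k) y < 0 by lra.
      have h2' : ~ gf (fm k) x < 0 by lra.
      by rewrite /Rltb; case: Rlt_dec => //; case: Rlt_dec.
Qed.

Definition LL (a : seq nat) : R := ln (INR (head O a)).
Definition tt (a : seq nat) (k : nat) : R := INR (nth 1%N (1%N :: a) k).
Definition th a k := ln (tt a k) / LL a.

Definition hypa (a : seq nat) := a <> [::] /\ all (fun r => (2 <= r)%N) a.

Lemma LL_pos a : hypa a -> 0 < LL a.
Proof.
  case: a => [[//]|r a] [_ /= /andP [hr _]].
  rewrite /LL /=; rewrite -ln_1; apply: ln_increasing; first lra.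
  apply: (Rlt_le_trans _ 2); first lra.
  change 2 with (INR 2); apply: le_INR; exact/leP.
Qed.

Lemma tt_ge1 a k : hypa a -> 1 <= tt a k.
Proof.
  move=> [_ ha]; rewrite /tt.
  case: k => [|k] /=; first by right.
  case: (ltnP k (size a)) => hk.
    have := all_nthP 1%N ha k hk => /= h.
    change 1 with (INR 1); apply: le_INR; apply/leP; exact: leq_trans h.
  by rewrite nth_default //; right.
Qed.

Lemma th0 a : th a 0 = 0.
Proof. by rewrite /th /tt /= ln_1 /Rdiv Rmult_0_l. Qed.

Definition FC (a : seq nat) (m : nat) : finType := ('I_m * 'I_m * 'I_(size a).+1)%type.
Definition formC a m (t : FC a m) : Form m :=
  let: (i, j, k) := t in
  if i == j then mkForm i j 0 0 1 else mkForm i j 1 (-1) (- th a k).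
Definition keyC a m (x : vec m) := keyf (@formC a m) x.

Definition FA (a : seq nat) (n : nat) : finType := ('I_n * 'I_n * 'I_(size a).+2)%type.
Definition formA a n (t : FA a n) : Form n :=
  let: (i, j, k) := t in
  match nat_of_ord k with
  | O => mkForm i j 1 0 0
  | S k' => if i == j then mkForm i j 0 0 1 else mkForm i j 1 (- tt a k') 0
  end.
Definition keyA a n (x : vec n) := keyf (@formA a n) x.

Lemma ord_neq n (i j : 'I_n) : (i < j)%N -> i <> j.
Proof. by move=> h E; rewrite E ltnn in h. Qed.

Lemma complC_iff a m x : hypa a ->
  @compl_C a m x <-> forall t, gf (@formC a m t) x <> 0.
Proof.
  move=> ha; split.
  - move=> [H1 H2] [[i j] k]; rewrite /formC /gf.
    case: eqP => [_|ne] /=; first lra.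
    case: k => [[|k] hk] /=.
    + rewrite th0.
      case: (ltngtP i j) => hij.
      * have := H1 i j hij; lra.
      * have := H1 j i hij; lra.
      * by case: ne; apply: val_inj.
    + have hr : nth 1%N a k \in a by apply: mem_nth.
      have := H2 i j ne _ hr. rewrite /th /tt /LL /=. lra.
  - move=> H; split.
    + move=> i j hij E.
      have := H (i, j, ord0); rewrite /formC /gf.
      have -> : (i == j) = false by apply/eqP; exact: ord_neq.
      rewrite /= th0; lra.
    + move=> i j ne r hr E.
      have hk : ((index r a).+1 < (size a).+1)%N by rewrite ltnS index_mem.
      have := H (i, j, Ordinal hk); rewrite /formC /gf.
      have -> : (i == j) = false by apply/eqP.
      rewrite /= /th /tt /LL /= nth_index //. lra.
Qed.

Lemma complA_iff a n x : hypa a ->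
  @compl_A a n x <-> forall t, gf (@formA a n t) x <> 0.
Proof.
  move=> ha; split.
  - move=> [H0 [H1 H2]] [[i j] k]; rewrite /formA /gf.
    case: k => [[|k] hk] /=.
    + have := H0 i; lra.
    case: eqP => [_|ne] /=; first lra.
    case: k hk => [|k] hk.
    + rewrite /tt /=.
      case: (ltngtP i j) => hij.
      * have := H1 i j hij; lra.
      * have := H1 j i hij; lra.
      * by case: ne; apply: val_inj.
    + have hr : nth 1%N a k \in a by apply: mem_nth.
      have := H2 i j ne _ hr. rewrite /tt /=. lra.
  - move=> H; split; [|split].
    + move=> i E; have := H (i, i, ord0); rewrite /formA /gf /=; lra.
    + move=> i j hij E.
      have hk : (1 < (size a).+2)%N by [].
      have := H (i, j, Ordinal hk); rewrite /formA /gf /=.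
      have -> : (i == j) = false by apply/eqP; exact: ord_neq.
      rewrite /tt /=; lra.
    + move=> i j ne r hr E.
      have hk : ((index r a).+2 < (size a).+2)%N by rewrite !ltnS index_mem.
      have := H (i, j, Ordinal hk); rewrite /formA /gf /=.
      have -> : (i == j) = false by apply/eqP.
      rewrite /tt /= nth_index //. lra.
Qed.

Lemma rC_img a m : hypa a -> rC a m = #|Img (@compl_C a m) (@keyC a m)|.
Proof.
  move=> ha; rewrite /rC; apply: ncomp_key => x y Sx Sy.
  apply: region => // z; exact: complC_iff.
Qed.

Lemma rA_img a n : hypa a -> rA a n = #|Img (@compl_A a n) (@keyA a n)|.
Proof.
  move=> ha; rewrite /rA; apply: ncomp_key => x y Sx Sy.
  apply: region => // z; exact: complA_iff.
Qed.

Definition ep n (P : {set 'I_n}) (l : 'I_#|P|) : 'I_n := enum_val l.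
Arguments ep {n} P l.
Lemma ep_in n (P : {set 'I_n}) l : ep P l \in P.
Proof. exact: enum_valP. Qed.
Lemma ep_inj n (P : {set 'I_n}) : injective (ep P).
Proof. exact: enum_val_inj. Qed.
Lemma ep_eq n (P : {set 'I_n}) l1 l2 : (ep P l1 == ep P l2) = (l1 == l2).
Proof. by apply/eqP/eqP => [/ep_inj|->]. Qed.
Lemma ep_surj n (P : {set 'I_n}) i : i \in P -> exists l, ep P l = i.
Proof. move=> hi; exists (enum_rank_in hi i); exact: enum_rankK_in. Qed.

Lemma divL_neg A L : 0 < L -> (A / L < 0 <-> A < 0).
Proof.
  move=> hL; have h := Rinv_0_lt_compat L hL.
  have E : L * / L = 1 by field; lra.
  rewrite /Rdiv; split => H; nra.
Qed.
Lemma divL_zero A L : 0 < L -> (A / L = 0 <-> A = 0).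
Proof.
  move=> hL; have h := Rinv_0_lt_compat L hL.
  have E : L * / L = 1 by field; lra.
  rewrite /Rdiv; split => H; [|rewrite H; ring].
  have : A * / L * L = 0 by rewrite H; ring.
  have -> : A * / L * L = A by field; lra.
  done.
Qed.

Lemma rel_pos x1 x2 t L : 0 < x1 -> 0 < x2 -> 0 < t -> 0 < L ->
  ((1 * x1 + - t * x2 + 0 < 0) <-> (1 * (ln x1 / L) + -1 * (ln x2 / L) + - (ln t / L) < 0)) /\
  ((1 * x1 + - t * x2 + 0 = 0) <-> (1 * (ln x1 / L) + -1 * (ln x2 / L) + - (ln t / L) = 0)).
Proof.
  move=> h1 h2 ht hL.
  have p : 0 < t * x2 by nra.
  have E : 1 * (ln x1 / L) + -1 * (ln x2 / L) + - (ln t / L) = (ln x1 - ln (t * x2)) / L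
    by rewrite ln_mult //; field; lra.
  rewrite E divL_neg // divL_zero //; split; split => h.
  - have := ln_increasing x1 (t * x2) h1 ltac:(lra); lra.
  - have := ln_lt_inv x1 (t * x2) h1 p ltac:(lra); lra.
  - have -> : x1 = t * x2 by lra. lra.
  - have := ln_inv x1 (t * x2) h1 p ltac:(lra); lra.
Qed.

Lemma sign_pos e d : (e < 0 <-> d < 0) -> (e = 0 <-> d = 0) -> (0 < e <-> 0 < d).
Proof.
  move=> [h1 h1'] [h2 h2']; split => h.
  - case: (Rtotal_order d 0) => [c|[c|c]] //; [have := h1' c | have := h2' c]; lra.
  - case: (Rtotal_order e 0) => [c|[c|c]] //; [have := h1 c | have := h2 c]; lra.
Qed.

Lemma rel_neg x1 x2 t L : x1 < 0 -> x2 < 0 -> 0 < t -> 0 < L ->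
  ((1 * x1 + - t * x2 + 0 < 0) <-> 0 < (1 * (ln (- x1) / L) + -1 * (ln (- x2) / L) + - (ln t / L))) /\
  ((1 * x1 + - t * x2 + 0 = 0) <-> (1 * (ln (- x1) / L) + -1 * (ln (- x2) / L) + - (ln t / L) = 0)).
Proof.
  move=> h1 h2 ht hL.
  have [A B] := rel_pos (x1 := - x1) (x2 := - x2) ltac:(lra) ltac:(lra) ht hL.
  have C := sign_pos A B.
  split.
  - rewrite -C; split => h; lra.
  - rewrite -B; split => h; lra.
Qed.

Lemma Rltb_false u : ~ u < 0 -> Rltb u 0 = false.
Proof. by rewrite /Rltb; case: Rlt_dec. Qed.
Lemma Rltb_true u : u < 0 -> Rltb u 0 = true.
Proof. by rewrite /Rltb; case: Rlt_dec. Qed.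
Lemma Rltb_iff u v : (u < 0 <-> v < 0) -> Rltb u 0 = Rltb v 0.
Proof.
  move=> [h1 h2]; rewrite /Rltb; case: Rlt_dec => a; case: Rlt_dec => b //; exfalso; tauto.
Qed.

Definition sgnP n (P : {set 'I_n}) (x : vec n) := forall i, (i \in P) = Rltb 0 (x i).

Lemma in_pos n (P : {set 'I_n}) x i : sgnP P x -> i \in P -> 0 < x i.
Proof. by move=> H; rewrite H => /RltbP. Qed.
Lemma notin_neg n (P : {set 'I_n}) x i : (forall i, x i <> 0) -> sgnP P x -> i \notin P -> x i < 0.
Proof.
  move=> nz H; rewrite H => /RltbP h; have := nz i.
  case: (Rtotal_order (x i) 0) => [c|[c|c]] //; lra.
Qed.
Lemma epN_neg n (P : {set 'I_n}) x l : (forall i, x i <> 0) -> sgnP P x -> x (ep (~:P) l) < 0.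
Proof. move=> nz H; apply: notin_neg => //; have := ep_in l; by rewrite inE. Qed.
Lemma ep_pos n (P : {set 'I_n}) x l : sgnP P x -> 0 < x (ep P l).
Proof. move=> H; apply: (in_pos H); exact: ep_in. Qed.

Lemma tt_pos a k : hypa a -> 0 < tt a k.
Proof. move=> ha; have := tt_ge1 k ha; lra. Qed.

Definition u_of a n (P : {set 'I_n}) (x : vec n) : vec #|P| := fun l => ln (x (ep P l)) / LL a.
Definition v_of a n (P : {set 'I_n}) (x : vec n) : vec #|~:P| :=
  fun l => ln (- x (ep (~:P) l)) / LL a.
Arguments u_of a {n} P x _.
Arguments v_of a {n} P x _.


Lemma compl_iff a n (P : {set 'I_n}) x : hypa a -> sgnP P x -> (forall i, x i <> 0) ->
  (@compl_A a n x <-> @compl_C a #|P| (u_of a P x) /\ @compl_C a #|~:P| (v_of a P x)).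
Proof.
  move=> ha sP nz.
  have hL := LL_pos ha.
  rewrite complA_iff // !complC_iff //; split.
  - move=> H; split => -[[l1 l2] k]; rewrite /formC /gf; (case: eqP => [_|ne] /=; first lra).
    + have := H (ep P l1, ep P l2, lift ord0 k); rewrite /formA /gf lift0 /= ep_eq.
      have -> : (l1 == l2) = false by apply/eqP.
      rewrite /= /u_of /th.
      have [_ e] := rel_pos (ep_pos l1 sP) (ep_pos l2 sP) (tt_pos k ha) hL.
      by move=> h1 h2; apply: h1; apply/e.
    + have := H (ep (~:P) l1, ep (~:P) l2, lift ord0 k); rewrite /formA /gf lift0 /= ep_eq.
      have -> : (l1 == l2) = false by apply/eqP.
      rewrite /= /v_of /th.
      have [_ e] := rel_neg (epN_neg l1 nz sP) (epN_neg l2 nz sP) (tt_pos k ha) hL.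
      by move=> h1 h2; apply: h1; apply/e.
  - move=> [Hu Hv] [[i j] k0].
    case: (unliftP ord0 k0) => [k ->|->]; rewrite /formA /gf /=; last by have := nz i; lra.
    rewrite ?lift0 /= ?add0n; case: eqP => [_|ne] /=; first lra.
    case: (boolP (i \in P)) => hi; case: (boolP (j \in P)) => hj.
    + have [l1 E1] := ep_surj hi; have [l2 E2] := ep_surj hj; subst i j.
      have := Hu (l1, l2, k); rewrite /formC /gf.
      have -> : (l1 == l2) = false by apply/eqP => E; apply: ne; rewrite E.
      rewrite /= /u_of /th.
      have [_ e] := rel_pos (ep_pos l1 sP) (ep_pos l2 sP) (tt_pos k ha) hL.
      by move=> h1 h2; apply: h1; apply/e.
    + have := in_pos sP hi; have := notin_neg nz sP hj; have := tt_pos k ha; move=> h1 h2 h3 E; simpl in *; nra.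
    + have := in_pos sP hj; have := notin_neg nz sP hi; have := tt_pos k ha; move=> h1 h2 h3 E; simpl in *; nra.
    + have hi' : i \in ~: P by rewrite inE.
      have hj' : j \in ~: P by rewrite inE.
      have [l1 E1] := ep_surj hi'; have [l2 E2] := ep_surj hj'; subst i j.
      have := Hv (l1, l2, k); rewrite /formC /gf.
      have -> : (l1 == l2) = false by apply/eqP => E; apply: ne; rewrite E.
      rewrite /= /v_of /th.
      have [_ e] := rel_neg (epN_neg l1 nz sP) (epN_neg l2 nz sP) (tt_pos k ha) hL.
      by move=> h1 h2; apply: h1; apply/e.
Qed.

Definition Phi a n (P : {set 'I_n}) (kk : {ffun FA a n -> bool}) :
  {ffun FC a #|P| -> bool} * {ffun FC a #|~:P| -> bool} :=
 ([ffun t : FC a #|P| => let: (l1, l2, k) := t in kk (ep P l1, ep P l2, lift ord0 k)],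
  [ffun t : FC a #|~:P| => let: (l1, l2, k) := t in
      (l1 != l2) && ~~ kk (ep (~:P) l1, ep (~:P) l2, lift ord0 k)]).

Lemma Phi_key a n (P : {set 'I_n}) x : hypa a -> sgnP P x -> @compl_A a n x ->
  Phi P (@keyA a n x) = (@keyC a #|P| (u_of a P x), @keyC a #|~:P| (v_of a P x)).
Proof.
  move=> ha sP Ax.
  have nz : forall i, x i <> 0 by case: Ax.
  have HA := proj1 (complA_iff x ha) Ax.
  have hL := LL_pos ha.
  rewrite /Phi; congr (_, _); apply/ffunP => -[[l1 l2] k];
    rewrite /keyA /keyC /keyf !ffunE /= /formA /formC /gf ?lift0 /= ?add0n ep_eq;
    (case: eqP => [_|ne] /=; first by rewrite !Rltb_false //; lra).
  - apply: Rltb_iff; rewrite /u_of /th.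
    exact: (proj1 (rel_pos (ep_pos l1 sP) (ep_pos l2 sP) (tt_pos k ha) hL)).
  - have := HA (ep (~:P) l1, ep (~:P) l2, lift ord0 k); rewrite /formA /gf lift0 /= ep_eq.
    have -> : (l1 == l2) = false by apply/eqP.
    rewrite /= /v_of /th => h0.
    have [e1 e2] := rel_neg (epN_neg l1 nz sP) (epN_neg l2 nz sP) (tt_pos k ha) hL.
    set e := (1 * x _ + _ + 0) in h0 e1 e2 *.
    set d := (1 * (ln (- x _) / _) + _ + _) in e1 e2 *.
    have dn : d <> 0 by move=> E; apply: h0; apply/e2.
    case: (Rtotal_order d 0) => [c|[c|c]] //.
    + rewrite (Rltb_true c) Rltb_false //; move/e1; lra.
    + rewrite (Rltb_false (u := d)); last lra.
      by rewrite Rltb_true //; apply/e1.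
Qed.

Lemma keyA_eval a n (x : vec n) t : @keyA a n x t = Rltb (gf (formA t) x) 0.
Proof. by rewrite /keyA /keyf ffunE. Qed.

Lemma Phi_inj a n (P : {set 'I_n}) x y : hypa a -> sgnP P x -> sgnP P y ->
  @compl_A a n x -> @compl_A a n y ->
  Phi P (@keyA a n x) = Phi P (@keyA a n y) -> @keyA a n x = @keyA a n y.
Proof.
  move=> ha sx sy Ax Ay E.
  have nzx : forall i, x i <> 0 by case: Ax.
  have nzy : forall i, y i <> 0 by case: Ay.
  have E1 := congr1 fst E; have E2 := congr1 snd E; simpl in E1, E2.
  apply/ffunP => -[[i j] k0].
  case: (unliftP ord0 k0) => [k ->|->].
  - case: (eqVneq i j) => [<-|ne].
      by rewrite !keyA_eval /formA /gf /= ?lift0 /= eqxx /= !Rltb_false //; lra.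
    case: (boolP (i \in P)) => hi; case: (boolP (j \in P)) => hj.
    + have [l1 E1'] := ep_surj hi; have [l2 E2'] := ep_surj hj; subst i j.
      by have := congr1 (fun f : {ffun _ -> bool} => f (l1, l2, k)) E1; rewrite !ffunE.
    + rewrite !keyA_eval /formA /gf /= ?lift0 /= (negbTE ne) /= ?add0n.
      have := in_pos sx hi; have := notin_neg nzx sx hj.
      have := in_pos sy hi; have := notin_neg nzy sy hj. have := tt_pos k ha.
      move=> *; simpl in *; rewrite !Rltb_false //; nra.
    + rewrite !keyA_eval /formA /gf /= ?lift0 /= (negbTE ne) /= ?add0n.
      have := in_pos sx hj; have := notin_neg nzx sx hi.
      have := in_pos sy hj; have := notin_neg nzy sy hi. have := tt_pos k ha.
      move=> *; simpl in *; rewrite !Rltb_true //; nra.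
    + have hi' : i \in ~: P by rewrite inE.
      have hj' : j \in ~: P by rewrite inE.
      have [l1 E1'] := ep_surj hi'; have [l2 E2'] := ep_surj hj'; subst i j.
      have := congr1 (fun f : {ffun _ -> bool} => f (l1, l2, k)) E2; rewrite !ffunE /=.
      have -> : (l1 != l2) by apply/eqP => E0; move/eqP: ne; rewrite E0.
      by move=> /= /negb_inj.
  - rewrite !keyA_eval /formA /gf /=.
    case: (boolP (i \in P)) => hi.
    + have := in_pos sx hi; have := in_pos sy hi => *.
      by rewrite !Rltb_false //; lra.
    + have := notin_neg nzx sx hi; have := notin_neg nzy sy hi => *.
      by rewrite !Rltb_true //; lra.
Qed.

Definition xOf a n (P : {set 'I_n}) (u : vec #|P|) (v : vec #|~:P|) : vec n := fun i =>
  match [pick l | ep P l == i] with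
  | Some l => exp (u l * LL a)
  | None => match [pick l | ep (~:P) l == i] with
            | Some l => - exp (v l * LL a)
            | None => 0 end
  end.

Lemma xOf_P a n (P : {set 'I_n}) u v l : xOf a u v (ep P l) = exp (u l * LL a).
Proof.
  rewrite /xOf; case: pickP => [l' /eqP /ep_inj -> //|H].
  by have := H l; rewrite eqxx.
Qed.

Lemma xOf_N a n (P : {set 'I_n}) u v l : xOf a u v (ep (~:P) l) = - exp (v l * LL a).
Proof.
  rewrite /xOf; case: pickP => [l' /eqP E|_].
    by have := ep_in l; rewrite -E inE ep_in.
  case: pickP => [l' /eqP /ep_inj -> //|H].
  by have := H l; rewrite eqxx.
Qed.

Lemma xOf_sgn a n (P : {set 'I_n}) (u : vec #|P|) (v : vec #|~:P|) : sgnP P (xOf a u v).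
Proof.
  move=> i; case: (boolP (i \in P)) => hi.
    have [l <-] := ep_surj hi; rewrite xOf_P; symmetry; apply/RltbP; exact: exp_pos.
  have hi' : i \in ~: P by rewrite inE.
  have [l E] := ep_surj hi'; subst i; rewrite xOf_N.
  symmetry; apply/RltbP; have := exp_pos (v l * LL a); lra.
Qed.

Lemma xOf_nz a n (P : {set 'I_n}) (u : vec #|P|) (v : vec #|~:P|) i : xOf a u v i <> 0.
Proof.
  case: (boolP (i \in P)) => hi.
    have [l <-] := ep_surj hi; rewrite xOf_P; have := exp_pos (u l * LL a); lra.
  have hi' : i \in ~: P by rewrite inE.
  have [l <-] := ep_surj hi'; rewrite xOf_N; have := exp_pos (v l * LL a); lra.
Qed.

Lemma u_of_xOf a n (P : {set 'I_n}) (u : vec #|P|) (v : vec #|~:P|) : hypa a -> u_of a P (xOf a u v) = u.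
Proof.
  move=> ha; have := LL_pos ha => hL.
  apply: functional_extensionality => l; rewrite /u_of xOf_P ln_exp; field; lra.
Qed.

Lemma v_of_xOf a n (P : {set 'I_n}) (u : vec #|P|) (v : vec #|~:P|) : hypa a -> v_of a P (xOf a u v) = v.
Proof.
  move=> ha; have := LL_pos ha => hL.
  apply: functional_extensionality => l; rewrite /v_of xOf_N Ropp_involutive ln_exp; field; lra.
Qed.

Definition posA a n (kk : {ffun FA a n -> bool}) : {set 'I_n} := [set i | ~~ kk (i, i, ord0)].

Lemma posA_key a n (P : {set 'I_n}) x : @compl_A a n x ->
  (posA (@keyA a n x) = P <-> sgnP P x).
Proof.
  move=> Ax; have nz : forall i, x i <> 0 by case: Ax.
  have E : forall i, (i \in posA (@keyA a n x)) = Rltb 0 (x i).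
    move=> i; rewrite inE keyA_eval /formA /gf /=.
    have := nz i; case: (Rtotal_order (x i) 0) => [c|[c|c]] // _.
      rewrite Rltb_true; last lra. by rewrite /Rltb; case: Rlt_dec => //= h; lra.
    rewrite Rltb_false; last lra. by rewrite /Rltb; case: Rlt_dec => //= h; lra.
  split; first by move=> <- i; rewrite E.
  by move=> sP; apply/setP => i; rewrite E sP.
Qed.

Lemma card_P a n (P : {set 'I_n}) : hypa a ->
  #|[set kk in Img (@compl_A a n) (@keyA a n) | posA kk == P]| =
  (#|Img (@compl_C a #|P|) (@keyC a #|P|)| * #|Img (@compl_C a #|~:P|) (@keyC a #|~:P|)|)%N.
Proof.
  move=> ha.
  rewrite -cardsX -(card_in_imset (f := Phi P)).
  - apply: eq_card => -[c1 c2]; apply/imsetP/setXP.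
    + move=> [kk hk E]; move: hk; rewrite inE => /andP [hA /eqP hp].
      move: hA; rewrite inE => /pbP [x [Ax Ex]]; subst kk.
      have sP := proj1 (posA_key P Ax) hp.
      have nz : forall i, x i <> 0 by case: Ax.
      have [Cu Cv] := proj1 (compl_iff ha sP nz) Ax.
      rewrite Phi_key // in E; case: E => -> ->.
      split; rewrite inE; apply/pbP; [exists (u_of a P x)|exists (v_of a P x)]; by split.
    + move=> [h1 h2]; move: h1 h2; rewrite !inE => /pbP [u [Cu <-]] /pbP [v [Cv <-]].
      have Ax : @compl_A a n (xOf a u v).
        apply: (proj2 (compl_iff ha (@xOf_sgn a n P u v) (@xOf_nz a n P u v))).
        by rewrite u_of_xOf // v_of_xOf.
      exists (@keyA a n (xOf a u v)).
        rewrite inE; apply/andP; split.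
          by rewrite inE; apply/pbP; exists (xOf a u v).
        by apply/eqP; apply/(posA_key P Ax); exact: xOf_sgn.
      by rewrite Phi_key // ?u_of_xOf ?v_of_xOf //; exact: xOf_sgn.
  - move=> k1 k2; rewrite !inE => /andP [h1 /eqP p1] /andP [h2 /eqP p2] E.
    move: h1 h2 => /pbP [x [Ax Ex]] /pbP [y [Ay Ey]]; subst k1 k2.
    apply: (Phi_inj ha _ _ Ax Ay E).
      exact: (proj1 (posA_key P Ax) p1).
    exact: (proj1 (posA_key P Ay) p2).
Qed.

Lemma sum_card_sets n (g : nat -> nat) :
  (\sum_(P : {set 'I_n}) g #|P| = \sum_(i < n.+1) 'C(n, i) * g i)%N.
Proof.
  have cle : forall P : {set 'I_n}, (#|P| < n.+1)%N.
    by move=> P; rewrite ltnS; apply: leq_trans (max_card _) _; rewrite card_ord.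
  rewrite (partition_big (fun P : {set 'I_n} => inord #|P| : 'I_n.+1) predT) //=.
  apply: eq_bigr => i _.
  rewrite (eq_bigr (fun _ => g i)); last first.
    by move=> P /eqP <-; rewrite inordK.
  rewrite sum_nat_const.
  congr (_ * _)%N.
  transitivity #|[set A : {set 'I_n} | #|A| == i]|; last by rewrite card_draws card_ord.
  apply: eq_card => P; rewrite !inE /=.
  rewrite unfold_in /=; apply/eqP/eqP => [<-|E]; first by rewrite inordK.
  by rewrite E inordK.
Qed.

Local Close Scope R_scope.
Unset Implicit Arguments.
Theorem mainTheorem11 (a : seq nat) :
  a <> [::] -> uniq a -> all (fun r => (2 <= r)%N) a ->
  forall n : nat,
    rA a n = (\sum_(i < n.+1) 'C(n, i) * rC a i * rC a (n - i))%N.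
Proof.
  move=> a0 _ aa n; have ha : hypa a by split.
  rewrite rA_img //.
  set IA := Img _ _.
  have -> : #|IA| = (\sum_(P : {set 'I_n}) #|[set kk in IA | posA kk == P]|)%N.
    rewrite -sum1_card (partition_big (@posA a n) predT) //=.
    apply: eq_bigr => P _; rewrite -sum1_card; apply: eq_bigl => kk; by rewrite inE.
  have cP : forall P : {set 'I_n}, #|~:P| = (n - #|P|)%N.
    move=> P; have E := cardsC P; rewrite card_ord in E.
    have L : forall p0 q0 r0 : nat, (p0 + q0)%N = r0 -> q0 = (r0 - p0)%N by move=> p0 q0 r0 <-; rewrite addKn.
    exact: L _ _ _ E.
  rewrite (eq_bigr (fun P : {set 'I_n} =>
     #|Img (@compl_C a #|P|) (@keyC a #|P|)| * #|Img (@compl_C a (n - #|P|)) (@keyC a (n - #|P|))|))%N;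
    last by move=> P _; rewrite card_P // cP.
  rewrite (@sum_card_sets n (fun i => (#|Img (@compl_C a i) (@keyC a i)| *
                                 #|Img (@compl_C a (n - i)) (@keyC a (n - i))|)%N)).
  by apply: eq_bigr => i _; rewrite !rC_img // mulnA.
Qed.
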